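(* Let $X\in\mathbb{R}^{n\times D}$ (possibly already augmented with a column of ones for the bias) with $X^\top X$ invertible, and $y\in\mathbb{R}^n$. Let $\mathcal{Q}$ be a partition of $\{1,\dots,D\}$ and $\mathcal{P}$ a partition of $\{1,\dots,n\}$ such that $(\mathcal{P},\mathcal{Q})$ is equitable on $X$ and $(X^\top y)_{j_1}=(X^\top y)_{j_2}$ whenever $j_1,j_2$ share a color of $\mathcal{Q}$. Set $X'=\Pi_{\mathcal{P}}^{\mathrm{Scaled}}X\Pi_{\mathcal{Q}}$, $y'=\Pi_{\mathcal{P}}^{\mathrm{Scaled}}y$, $W'=\Pi_{\mathcal{P}}^\top\Pi_{\mathcal{P}}$ (the diagonal matrix with $W'_{SS}=|S|$), and assume $(X')^\top W'X'$ is invertible. Let $w'=((X')^\top W'X')^{-1}(X')^\top W'y'$. Then $\Pi_{\mathcal{Q}}w'=(X^\top X)^{-1}X^\top y$.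
   Context: A partition of a finite set is a set of nonempty pairwise disjoint subsets (''colors'') covering it. A pair $(\mathcal{P},\mathcal{Q})$ of partitions of the row and column indices of $A$ is equitable on $A$ if for every $S\in\mathcal{P}$, $T\in\mathcal{Q}$: $\sum_{j\in T}A_{ij}$ is the same for all $i\in S$ and $\sum_{i\in S}A_{ij}$ is the same for all $j\in T$. For a partition $\mathcal{Q}$ of $\{1,\dots,D\}$, $\Pi_{\mathcal{Q}}\in\{0,1\}^{D\times|\mathcal{Q}|}$ has $(\Pi_{\mathcal{Q}})_{jT}=1$ iff $j\in T$; $\Pi^{\mathrm{Scaled}}_{\mathcal{Q}}\in\mathbb{R}^{|\mathcal{Q}|\times D}$ has entries $1/|T|$ if $j\in T$ and $0$ otherwise (row-normalized $\Pi_{\mathcal{Q}}^\top$); similarly for $\mathcal{P}$. *)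

(* Defs.v *)
From HB Require Import structures.
From mathcomp Require Import all_boot all_order all_algebra.
Set Implicit Arguments. Unset Strict Implicit. Unset Printing Implicit Defensive.
Import Order.TTheory GRing.Theory Num.Theory.
Local Open Scope ring_scope.

(* This is mathcomp's
   [partition P [set: 'I_n]] (which includes set0 \notin P). *)
Definition is_partition (n : nat) (P : {set {set 'I_n}}) : Prop :=
  partition P [set: 'I_n].

Definition color (n : nat) (P : {set {set 'I_n}}) (k : 'I_#|P|) : {set 'I_n} :=
  @enum_val _ (pred_of_set P) k.

Definition PiM (R : nzRingType) (D : nat) (Q : {set {set 'I_D}}) : 'M[R]_(D, #|Q|) :=
  \matrix_(j < D, k < #|Q|) (if j \in color k then 1 else 0).

Definition PiScaled (R : fieldType) (D : nat) (Q : {set {set 'I_D}}) : 'M[R]_(#|Q|, D) :=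
  \matrix_(k < #|Q|, j < D) (if j \in color k then (#|color k|%:R)^-1 else 0).

Definition equitable (R : nzRingType) (n D : nat) (P : {set {set 'I_n}})
  (Q : {set {set 'I_D}}) (A : 'M[R]_(n, D)) : Prop :=
  forall S T, S \in P -> T \in Q ->
    (forall i1 i2, i1 \in S -> i2 \in S ->
       \sum_(j in T) A i1 j = \sum_(j in T) A i2 j) /\
    (forall j1 j2, j1 \in T -> j2 \in T ->
       \sum_(i in S) A i j1 = \sum_(i in S) A i j2).

(* Main.v *)
Require Import Defs.
From HB Require Import structures.
From mathcomp Require Import all_boot all_order all_algebra.
From mathcomp Require Import ring.
Import Order.TTheory GRing.Theory Num.Theory.
Local Open Scope ring_scope.

Section Part.
Variables (R : numFieldType) (m : nat) (P : {set {set 'I_m}}).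
Hypothesis hP : is_partition P.

Lemma hcov : cover P = [set: 'I_m].
Proof. by move: hP; rewrite /is_partition /partition => /and3P[/eqP]. Qed.
Lemma htriv : trivIset P.
Proof. by move: hP; rewrite /is_partition /partition => /and3P[]. Qed.
Lemma h0 : set0 \notin P.
Proof. by move: hP; rewrite /is_partition /partition => /and3P[]. Qed.

Lemma color_in (k : 'I_#|P|) : color k \in P.
Proof. exact: enum_valP. Qed.

Lemma color_card (k : 'I_#|P|) : (#|color k| != 0)%N.
Proof.
rewrite cards_eq0; apply/eqP => E; have := color_in k; rewrite E.
by have := h0 => /negP.
Qed.

Lemma color_cardR (k : 'I_#|P|) : (#|color k|%:R : R) != 0.
Proof. by rewrite pnatr_eq0 color_card. Qed.

Lemma pblock_in i : pblock P i \in P.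
Proof. by apply: pblock_mem; rewrite hcov inE. Qed.
Lemma in_pblock i : i \in pblock P i.
Proof. by rewrite mem_pblock hcov inE. Qed.

Lemma sum_color i (g : {set 'I_m} -> R) :
  \sum_(k < #|P|) (if i \in color k then g (color k) else 0) = g (pblock P i).
Proof.
rewrite /color -(big_enum_val (A := pred_of_set P) (fun S : {set 'I_m} => if i \in S then g S else 0)) /=.
rewrite (bigD1 (pblock P i)) ?pblock_in //= in_pblock big1 ?addr0 //.
move=> S /andP[SP neS]; case: ifP => // iS.
by move: neS; rewrite (def_pblock htriv SP iS) eqxx.
Qed.

Lemma color_disj (k l : 'I_#|P|) i : k != l -> i \in color k -> i \in color l -> False.
Proof.
move=> kl ik il.
have ne : color k != color l.
  by apply: contra kl => /eqP /enum_val_inj ->.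
have := (trivIsetP htriv) _ _ (color_in k) (color_in l) ne.
by move/disjointFr => /(_ i ik); rewrite il.
Qed.

Lemma SB1 : PiScaled R P *m PiM R P = 1%:M.
Proof.
apply/matrixP => k l; rewrite !mxE.
under eq_bigr => i _ do rewrite !mxE.
case: (eqVneq k l) => [<-|kl].
  rewrite (eq_bigr (fun i => if i \in color k then #|color k|%:R^-1 else 0)); last by move=> i _; case: ifP; rewrite ?mulr1 ?mul0r.
  rewrite -big_mkcond /= sumr_const -[X in X = _]mulr_natr mulVf //; exact: color_cardR.
rewrite big1 //= => i _; case: ifP => ik; case: ifP => il; rewrite ?mulr0 ?mul0r //.
by case: (@color_disj k l i kl ik il).
Qed.

Lemma Esym : (PiM R P *m PiScaled R P)^T = PiM R P *m PiScaled R P.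
Proof.
apply/matrixP => i i'; rewrite !mxE; apply: eq_bigr => k _; rewrite !mxE.
by case: ifP; case: ifP; rewrite ?mul1r ?mulr1 ?mul0r ?mulr0.
Qed.

Lemma Bmul_entry p (M : 'M[R]_(#|P|, p)) i j :
  (PiM R P *m M) i j = \sum_(k < #|P|) (if i \in color k then M k j else 0).
Proof. rewrite mxE; apply: eq_bigr => k _; rewrite mxE; by case: ifP; rewrite ?mul1r ?mul0r. Qed.

Lemma SPmul_entry p (M : 'M[R]_(m, p)) k j :
  (PiScaled R P *m M) k j = #|color k|%:R^-1 * \sum_(i in color k) M i j.
Proof.
rewrite mxE mulr_sumr [RHS]big_mkcond /=; apply: eq_bigr => i _; rewrite mxE.
by case: ifP; rewrite ?mul0r ?mulr0.
Qed.

Lemma mulB_entry p (M : 'M[R]_(p, m)) i k :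
  (M *m PiM R P) i k = \sum_(j in color k) M i j.
Proof.
rewrite mxE [RHS]big_mkcond /=; apply: eq_bigr => j _; rewrite mxE.
by case: ifP; rewrite ?mulr1 ?mulr0.
Qed.

Lemma BSP_entry p (M : 'M[R]_(m, p)) i j :
  (PiM R P *m (PiScaled R P *m M)) i j =
  #|pblock P i|%:R^-1 * \sum_(i' in pblock P i) M i' j.
Proof.
rewrite Bmul_entry.
under eq_bigr => k _ do rewrite SPmul_entry.
exact: (sum_color i (fun S => #|S|%:R^-1 * \sum_(i' in S) M i' j)).
Qed.

Lemma fix_entry (v : 'cV[R]_m) :
  (forall T j1 j2, T \in P -> j1 \in T -> j2 \in T -> v j1 0 = v j2 0) ->
  PiM R P *m (PiScaled R P *m v) = v.
Proof.
move=> hv; apply/matrixP => j z; rewrite ord1 BSP_entry.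
rewrite (eq_bigr (fun _ => v j 0)); last first.
  by move=> j' hj'; apply: (hv _ j' j (pblock_in j) hj' (in_pblock j)).
rewrite sumr_const -(mulr_natr (v j 0)) mulrCA mulVf ?mulr1 // pnatr_eq0 cards_eq0.
by apply/eqP => E; have := in_pblock j; rewrite E inE.
Qed.

End Part.

Lemma EX_XF (R : numFieldType) n D (P : {set {set 'I_n}}) (Q : {set {set 'I_D}})
  (X : 'M[R]_(n, D)) : is_partition P -> is_partition Q -> equitable P Q X ->
  PiM R P *m (PiScaled R P *m X) = X *m PiM R Q *m PiScaled R Q.
Proof.
move=> hP hQ heq; apply/matrixP => i j; rewrite BSP_entry //.
rewrite mxE.
rewrite (eq_bigr (fun k => if j \in color k then
     (fun T => (\sum_(j' in T) X i j') * #|T|%:R^-1) (color k) else 0)); last first.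
  by move=> k _; rewrite mulB_entry mxE; case: ifP; rewrite ?mulr0.
rewrite (@sum_color R D Q hQ j (fun T => (\sum_(j' in T) X i j') * #|T|%:R^-1)) /=.
set S := pblock P i; set T := pblock Q j.
have SP : S \in P by apply: pblock_in.
have TQ : T \in Q by apply: pblock_in.
have [hr hc] := heq S T SP TQ.
set r := \sum_(j' in T) X i j'.
set c := \sum_(i' in S) X i' j.
have hs : (#|S|%:R : R) != 0.
  by rewrite pnatr_eq0 cards_eq0; apply/eqP => E; have := @in_pblock _ _ hP i; rewrite -/S E inE.
have ht : (#|T|%:R : R) != 0.
  by rewrite pnatr_eq0 cards_eq0; apply/eqP => E; have := @in_pblock _ _ hQ j; rewrite -/T E inE.
have e : r * #|S|%:R = c * #|T|%:R.
  have e1 : \sum_(i' in S) \sum_(j' in T) X i' j' = r * #|S|%:R.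
    rewrite (eq_bigr (fun _ => r)) ?sumr_const ?mulr_natr //.
    by move=> i' hi'; apply: hr => //; apply: in_pblock.
  have e2 : \sum_(j' in T) \sum_(i' in S) X i' j' = c * #|T|%:R.
    rewrite (eq_bigr (fun _ => c)) ?sumr_const ?mulr_natr //.
    by move=> j' hj'; apply: hc => //; apply: in_pblock.
  by rewrite -e1 -e2 exchange_big.
have ->: c = r * #|S|%:R / #|T|%:R by rewrite e mulfK.
field. by rewrite hs ht.
Qed.


Theorem mainTheorem7 (R : realFieldType) (n D : nat)
  (X : 'M[R]_(n, D)) (y : 'cV[R]_n)
  (P : {set {set 'I_n}}) (Q : {set {set 'I_D}}) :
  X^T *m X \in unitmx ->
  is_partition P -> is_partition Q ->
  equitable P Q X ->
  (forall T j1 j2, T \in Q -> j1 \in T -> j2 \in T ->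
     (X^T *m y) j1 0 = (X^T *m y) j2 0) ->
  let X' := PiScaled R P *m X *m PiM R Q in
  let y' := PiScaled R P *m y in
  let W' := (PiM R P)^T *m PiM R P in
  (X'^T *m W' *m X') \in unitmx ->
  let w' := invmx (X'^T *m W' *m X') *m X'^T *m W' *m y' in
  PiM R Q *m w' = invmx (X^T *m X) *m X^T *m y.
Proof.
move=> hA hP hQ heq hy X' y' W' hG w'.
rewrite /w' /X' /y' /W' in hG *.
set B := PiM R P; set SP := PiScaled R P; set C := PiM R Q; set SQ := PiScaled R Q.
have EX : B *m (SP *m X) = X *m C *m SQ := @EX_XF R n D P Q X hP hQ heq.
have SB1Q : SQ *m C = 1%:M := @SB1 R _ _ hQ.
have EsP : (B *m SP)^T = B *m SP := @Esym R _ _.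
have EsQ : (C *m SQ)^T = C *m SQ := @Esym R _ _.
have EXC : B *m SP *m (X *m C) = X *m C.
  by rewrite -mulmxA (mulmxA SP) mulmxA EX -(mulmxA _ SQ) SB1Q mulmx1.
have BX' : B *m (SP *m X *m C) = X *m C by rewrite -(mulmxA SP) (mulmxA B) EXC.
have Geq : (SP *m X *m C)^T *m (B^T *m B) *m (SP *m X *m C) = (X *m C)^T *m (X *m C).
  by rewrite (mulmxA (SP *m X *m C)^T) -trmx_mul -(mulmxA _ B) BX'.
have yeq : (SP *m X *m C)^T *m (B^T *m B) *m (SP *m y) = (X *m C)^T *m y.
  rewrite (mulmxA (SP *m X *m C)^T) -trmx_mul -(mulmxA _ B) BX'.
  by rewrite (mulmxA B SP) mulmxA -EsP -trmx_mul EXC.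
rewrite Geq in hG *.
set G := (X *m C)^T *m (X *m C).
have -> : invmx G *m (SP *m X *m C)^T *m (B^T *m B) *m (SP *m y)
   = invmx G *m ((X *m C)^T *m y) by rewrite -yeq !mulmxA.
set A := X^T *m X.
have h1 : X *m (C *m SQ) = B *m SP *m X by rewrite mulmxA -EX mulmxA.
have h2 : C *m SQ *m X^T = X^T *m (B *m SP) by rewrite -EsQ -trmx_mul h1 trmx_mul EsP.
have AF : A *m (C *m SQ) = C *m SQ *m A.
  rewrite /A -mulmxA h1 [RHS]mulmxA h2.
  by rewrite !mulmxA.
have AiF : invmx A *m (C *m SQ) = C *m SQ *m invmx A.
  apply: (canLR (mulKmx hA)).
  by rewrite mulmxA AF -(mulmxA _ A) mulmxV // mulmx1.
have FXy : C *m (SQ *m (X^T *m y)) = X^T *m y := @fix_entry R D Q hQ _ hy.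
set w := invmx A *m X^T *m y.
have Fw : C *m (SQ *m w) = w.
  by rewrite /w -(mulmxA (invmx A)) (mulmxA C) (mulmxA (C *m SQ)) -AiF -!mulmxA FXy.
have XCy : (X *m C)^T *m y = G *m (SQ *m w).
  rewrite /G -(mulmxA (X *m C)^T) -(mulmxA X) Fw trmx_mul -mulmxA.
  by rewrite -(mulmxA C^T) (mulmxA X^T X) -/A /w -(mulmxA (invmx A)) mulKVmx.
by rewrite XCy mulKmx.
Qed.
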